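(* Fix $N\in\mathbb N$ and $p\in\mathbb N$. Let $X_k^\star=\sum_{j=-2}^{N-1}x_k^{j,\star}\phi^j$ be the optimal state of the stochastic LQ problem described in the context, where $x^{j,\star}$ is the optimal state trajectory of the coefficient problem $\mathcal P_j$, and define the moving-horizon truncation $X_k^{\mathrm{trun},\star}:=\sum_{j\in\{-2,-1\}\cup\{\max(0,k-p),\dots,k-1\}}x_k^{j,\star}\phi^j$. Then for $k\in\{0,\dots,N-1\}$ the truncation error $\Delta X_k(p+2):=X_k^\star-X_k^{\mathrm{trun},\star}$ satisfies $$\Delta X_k(p+2)=\begin{cases}0, & k\le p,\\ \sum_{j=0}^{k-p-1}\bar A_{j+1}^{k-1}Ew^0\phi^j, & \text{otherwise}.\end{cases}$$
   Context: Matrices $A\in\mathbb R^{n_x\times n_x}$, $B\in\mathbb R^{n_x\times n_u}$, $E\in\mathbb R^{n_x\times1}$; $Q_N,Q\succeq0$, $R\succ0$; $(A,B)$ stabilizable, $(A,Q^{1/2})$ detectable. There are independent random variables $\xi_{\mathrm{ini}},\xi_0,\xi_1,\dots$ ($\xi_0,\xi_1,\dots$ i.i.d.) and real functions $\varphi^1,\psi^1$ such that $\phi^{-2}:=1$, $\phi^{-1}:=\varphi^1(\xi_{\mathrm{ini}})$, $\phi^j:=\psi^1(\xi_j)$ ($j\ge0$) have zero mean and finite nonzero second moment for $j\ge-1$. The system is $X_{k+1}=AX_k+BU_k+EW_k$, $X_0=X_{\mathrm{ini}}=x^{-2}_{\mathrm{ini}}+x^{-1}_{\mathrm{ini}}\phi^{-1}$,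 with scalar i.i.d. disturbances $W_k=\mathbb E[W]+w^0\phi^k$, $w^0\in\mathbb R$; inputs $U_k$ are square integrable and measurable w.r.t. $\sigma(X_i,i\le k)$; the stochastic LQ problem minimizes $\mathbb E[X_N^\top Q_NX_N]+\sum_{k=0}^{N-1}\mathbb E[X_k^\top QX_k+U_k^\top RU_k]$. Coefficient problem $\mathcal P_j$ ($j\in\{-2,\dots,N-1\}$): minimize $x_N^{j\top}Q_Nx_N^j+\sum_{k=0}^{N-1}(x_k^{j\top}Qx_k^j+u_k^{j\top}Ru_k^j)$ s.t. $x^j_{k+1}=Ax^j_k+Bu^j_k+Ew^j_k$, $x^j_0=x^j_{\mathrm{ini}}$ ($x^j_{\mathrm{ini}}=0$ for $j\ge0$), and $u^j_k=0$ for $k\le j$ when $j\ge 0$, where $w^{-2}_k=\mathbb E[W]$, $w^{-1}_k=0$, $w^j_k=w^0$ if $k=j$ and $0$ otherwise for $j\ge0$. Riccati recursion: $P_0=Q_N$, and for $k\ge1$: $K_k=-(R+B^\top P_{k-1}B)^{-1}B^\top P_{k-1}A$, $P_k=Q+A^\top(P_{k-1}-P_{k-1}B(R+B^\top P_{k-1}B)^{-1}B^\top P_{k-1})A$. For integers $k_1,k_2$: $\bar A_{k_1}^{k_2}:=(A+BK_{N-k_2})\cdots(A+BK_{N-k_1})$ (larger $k$ to the left) if $0\le k_1\le k_2$, and $I$ otherwise. *)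

(* Defs.v *)
From mathcomp Require Import all_boot all_order all_algebra.
From mathcomp Require Import reals.
Set Implicit Arguments. Unset Strict Implicit. Unset Printing Implicit Defensive.
Import Order.TTheory GRing.Theory Num.Theory.
Local Open Scope ring_scope.

Section LQ.
Variable R : realType.

Definition qf n (M : 'M[R]_n) (v : 'cV[R]_n) : R := (v^T *m M *m v) ord0 ord0.

Definition psd n (M : 'M[R]_n) : Prop := M^T = M /\ forall v, 0 <= qf M v.
Definition pd n (M : 'M[R]_n) : Prop := M^T = M /\ forall v, v != 0 -> 0 < qf M v.

Definition schur_stable n (M : 'M[R]_n) : Prop :=
  forall eps : R, 0 < eps -> exists K0 : nat, forall k : nat, (K0 <= k)%N ->
    forall i j, `|(M ^+ k) i j| < eps.

Definition stabilizable nx nu (A : 'M[R]_nx) (B : 'M[R]_(nx, nu)) : Prop :=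
  exists K : 'M[R]_(nu, nx), schur_stable (A + B *m K).

Definition detectable nx ny (A : 'M[R]_nx) (C : 'M[R]_(ny, nx)) : Prop :=
  exists L : 'M[R]_(nx, ny), schur_stable (A + L *m C).

(* (A, Q^{1/2}) detectable: stated with the PSD square root S of Q
   (S psd, S *m S = Q). *)
Definition detectable_sqrt nx (A Q : 'M[R]_nx) : Prop :=
  exists S : 'M[R]_nx, psd S /\ S *m S = Q /\ detectable A S.

Variables (nx nu : nat) (A : 'M[R]_nx) (B : 'M[R]_(nx, nu)) (E : 'cV[R]_nx)
          (QN Q : 'M[R]_nx) (Rc : 'M[R]_nu) (N : nat).

Fixpoint ricP (k : nat) : 'M[R]_nx :=
  match k with
  | 0 => QN
  | k'.+1 => let P := ricP k' in
      Q + A^T *m (P - P *m B *m invmx (Rc + B^T *m P *m B) *m B^T *m P) *m A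
  end.

(* K_k for k >= 1 *)
Definition ricK (k : nat) : 'M[R]_(nu, nx) :=
  - (invmx (Rc + B^T *m ricP k.-1 *m B) *m B^T *m ricP k.-1 *m A).

Definition Acl (k : nat) : 'M[R]_nx := A + B *m ricK (N - k).

Fixpoint abar_aux (k2 m : nat) : 'M[R]_nx :=
  match m with
  | 0 => 1%:M
  | m'.+1 => Acl k2 *m abar_aux k2.-1 m'
  end.

(* \bar A_{k1}^{k2} = (A+BK_{N-k2}) ... (A+BK_{N-k1}) if k1 <= k2, I otherwise
   (arguments are nat, so 0 <= k1 holds automatically). *)
Definition Abar (k1 k2 : nat) : 'M[R]_nx :=
  if (k1 <= k2)%N then abar_aux k2 (k2 - k1).+1 else 1%:M.

Definition lq_feasible (x0 : 'cV[R]_nx) (w : nat -> R) (fixed : nat -> bool)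
  (x : nat -> 'cV[R]_nx) (u : nat -> 'cV[R]_nu) : Prop :=
  x 0%N = x0 /\
  (forall k, (k < N)%N -> x k.+1 = A *m x k + B *m u k + w k *: E) /\
  (forall k, (k < N)%N -> fixed k -> u k = 0).

Definition lq_cost (x : nat -> 'cV[R]_nx) (u : nat -> 'cV[R]_nu) : R :=
  qf QN (x N) + \sum_(k < N) (qf Q (x k) + qf Rc (u k)).

Definition lq_optimal x0 w fixed x u : Prop :=
  lq_feasible x0 w fixed x u /\
  forall x' u', lq_feasible x0 w fixed x' u' -> lq_cost x u <= lq_cost x' u'.

(* Coefficient problem P_j, j in {-2, ..., N-1} (as an int). *)
Variables (xm2 xm1 : 'cV[R]_nx) (EW w0 : R).

Definition coef_xini (j : int) : 'cV[R]_nx :=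
  if j == -2 then xm2 else if j == -1 then xm1 else 0.

Definition coef_w (j : int) (k : nat) : R :=
  if j == -2 then EW else if j == -1 then 0
  else if k%:Z == j then w0 else 0.

Definition coef_fixed (j : int) (k : nat) : bool := (0 <= j) && (k%:Z <= j).

Definition coef_optimal (j : int) x u : Prop :=
  lq_optimal (coef_xini j) (coef_w j) (coef_fixed j) x u.

Definition Xstar (Omega : Type) (phi : int -> Omega -> R)
  (xs : int -> nat -> 'cV[R]_nx) (k : nat) (om : Omega) : 'cV[R]_nx :=
  \sum_(0 <= i < N + 2) phi (i%:Z - 2) om *: xs (i%:Z - 2) k.

Definition Xtrun (p : nat) (Omega : Type) (phi : int -> Omega -> R)
  (xs : int -> nat -> 'cV[R]_nx) (k : nat) (om : Omega) : 'cV[R]_nx :=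
  phi (-2) om *: xs (-2) k + phi (-1) om *: xs (-1) k
  + \sum_(maxn 0 (k - p) <= i < k) phi i%:Z om *: xs i%:Z k.

End LQ.

(* Main.v *)
Require Import Defs.
From mathcomp Require Import all_boot all_order all_algebra.
From mathcomp Require Import reals ring lra zify.
Set Implicit Arguments. Unset Strict Implicit. Unset Printing Implicit Defensive.
Import Order.TTheory GRing.Theory Num.Theory.
Local Open Scope ring_scope.

Section Alg.
Variable R : realType.
Variables (nx nu : nat) (A : 'M[R]_nx) (B : 'M[R]_(nx, nu)) (Q : 'M[R]_nx) (Rc : 'M[R]_nu).

Lemma tr11 (M : 'M[R]_1) : M^T = M.
Proof. by apply/matrixP => i j; rewrite !ord1 mxE. Qed.

Lemma e00D (M1 M2 : 'M[R]_1) : (M1 + M2) ord0 ord0 = M1 ord0 ord0 + M2 ord0 ord0.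
Proof. by rewrite mxE. Qed.

Lemma e00N (M1 : 'M[R]_1) : (- M1) ord0 ord0 = - M1 ord0 ord0.
Proof. by rewrite mxE. Qed.

Lemma qfE n (M : 'M[R]_n) v : qf M v = (v^T *m M *m v) ord0 ord0.
Proof. by []. Qed.

Lemma quad_exp n (G Gi : 'M[R]_n) (GiT : Gi^T = Gi) (GGi : G *m Gi = 1%:M)
  (GiG : Gi *m G = 1%:M) (u z : 'cV[R]_n) :
  (u + Gi *m z)^T *m G *m (u + Gi *m z) =
   u^T *m G *m u + u^T *m z + z^T *m u + z^T *m Gi *m z.
Proof.
rewrite [(u + _)^T]linearD /= trmx_mul GiT !mulmxDl !mulmxDr.
rewrite -!mulmxA !(mulmxA G Gi) !(mulmxA Gi G) GGi GiG !mul1mx !mulmxA.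
by rewrite !addrA.
Qed.

Lemma complete (P : 'M[R]_nx) (hP : P^T = P) (hRc : Rc^T = Rc)
  (hG : Rc + B^T *m P *m B \in unitmx) (x : 'cV[R]_nx) (u : 'cV[R]_nu) :
  let G := Rc + B^T *m P *m B in
  let K := - (invmx G *m B^T *m P *m A) in
  qf Q x + qf Rc u + qf P (A *m x + B *m u) =
  qf (Q + A^T *m (P - P *m B *m invmx G *m B^T *m P) *m A) x + qf G (u - K *m x).
Proof.
move=> G K.
set Gi := invmx G.
have GGi : G *m Gi = 1%:M by apply: mulmxV.
have GiG : Gi *m G = 1%:M by apply: mulVmx.
have GT : G^T = G by rewrite /G linearD /= hRc !trmx_mul trmxK hP mulmxA.
have GiT : Gi^T = Gi by rewrite /Gi trmx_inv GT.
set z := B^T *m P *m A *m x.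
have hK : u - K *m x = u + Gi *m z.
  by rewrite /K mulNmx opprK /z !mulmxA.
rewrite hK !qfE.
have e1 := quad_exp GiT GGi GiG u z.
have L1 : (A *m x + B *m u)^T *m P *m (A *m x + B *m u) =
   x^T *m A^T *m P *m A *m x + x^T *m A^T *m P *m B *m u +
   u^T *m B^T *m P *m A *m x + u^T *m B^T *m P *m B *m u.
  rewrite [(_ + _)^T]linearD /= !trmx_mul !mulmxDl !mulmxDr !mulmxA.
  by rewrite !addrA.
have R1 : x^T *m (Q + A^T *m (P - P *m B *m Gi *m B^T *m P) *m A) *m x =
   x^T *m Q *m x + x^T *m A^T *m P *m A *m x -
   x^T *m A^T *m P *m B *m Gi *m B^T *m P *m A *m x.
  by rewrite !(mulmxDr, mulmxDl, mulmxBr, mulmxBl) !(mulmxN, mulNmx) !mulmxA addrA.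
have G1 : u^T *m G *m u = u^T *m Rc *m u + u^T *m B^T *m P *m B *m u.
  by rewrite /G !mulmxDr !mulmxDl !mulmxA.
have Z1 : u^T *m z = u^T *m B^T *m P *m A *m x by rewrite /z !mulmxA.
have Z2 : z^T *m u = x^T *m A^T *m P *m B *m u.
  by rewrite /z !trmx_mul !trmxK hP !mulmxA.
have Z3 : z^T *m Gi *m z = x^T *m A^T *m P *m B *m Gi *m B^T *m P *m A *m x.
  by rewrite /z !trmx_mul !trmxK hP !mulmxA.
rewrite e1 L1 R1 G1 Z1 Z2 Z3.
have T1 : u^T *m B^T *m P *m A *m x = (x^T *m A^T *m P *m B *m u)^T.
  by rewrite !trmx_mul !trmxK hP !mulmxA.
rewrite T1 tr11 !e00D !e00N.
lra.
Qed.

Lemma qf0 n (M : 'M[R]_n) : qf M 0 = 0.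
Proof. by rewrite qfE mulmx0 mxE. Qed.

Lemma qfD n (M1 M2 : 'M[R]_n) v : qf (M1 + M2) v = qf M1 v + qf M2 v.
Proof. by rewrite !qfE mulmxDr mulmxDl e00D. Qed.

Lemma qfBPB (P : 'M[R]_nx) v : qf (B^T *m P *m B) v = qf P (B *m v).
Proof. by rewrite !qfE trmx_mul !mulmxA. Qed.

Lemma pd_unit n (M : 'M[R]_n) : (forall v, v != 0 -> 0 < qf M v) -> M \in unitmx.
Proof.
move=> hM; rewrite unitmxE unitfE; apply/negP => /det0P [v nv vM].
have := hM v^T; rewrite trmx_eq0 nv => /(_ isT).
by rewrite qfE trmxK vM mul0mx mxE ltxx.
Qed.

Lemma G_pd (P : 'M[R]_nx) : (forall v, 0 <= qf P v) -> pd Rc ->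
  forall v, v != 0 -> 0 < qf (Rc + B^T *m P *m B) v.
Proof.
move=> hP [_ hR] v nv; rewrite qfD qfBPB.
by apply: ltr_wpDr; [apply: hP | apply: hR].
Qed.

End Alg.


Section Ric.
Variable R : realType.
Variables (nx nu : nat) (A : 'M[R]_nx) (B : 'M[R]_(nx, nu)) (E : 'cV[R]_nx)
  (QN Q : 'M[R]_nx) (Rc : 'M[R]_nu) (N : nat).
Hypotheses (hQN : psd QN) (hQ : psd Q) (hR : pd Rc).

Local Notation P k := (ricP A B QN Q Rc k).
Local Notation G k := (Rc + B^T *m P k *m B).

Lemma ricP_psd k : (P k)^T = P k /\ forall v, 0 <= qf (P k) v.
Proof.
elim: k => [|k [hs hp]] /=; first exact: hQN.
have hG : G k \in unitmx by apply: pd_unit; apply: G_pd.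
have GT : (G k)^T = G k.
  by rewrite linearD /= hR.1 !trmx_mul trmxK hs mulmxA.
split.
  rewrite linearD /= hQ.1 !trmx_mul trmxK linearB /= !trmx_mul !trmxK hs.
  by rewrite trmx_inv GT !mulmxA.
move=> v.
have := complete A Q hs hR.1 hG v (- (invmx (G k) *m B^T *m P k *m A) *m v).
rewrite /= subrr qf0 addr0 => <-.
apply: addr_ge0; first apply: addr_ge0.
- exact: hQ.2.
- by case: hR => _ h; have [->|/h/ltW] := eqVneq (- (invmx (G k) *m B^T *m P k *m A) *m v) 0; rewrite ?qf0.
- exact: hp.
Qed.

Lemma G_unit k : G k \in unitmx.
Proof. by apply: pd_unit; apply: G_pd => //; apply: (ricP_psd k).2. Qed.


Lemma tail (x : nat -> 'cV[R]_nx) (u : nat -> 'cV[R]_nu) m :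
  (m <= N)%N -> (forall i, (m <= i < N)%N -> x i.+1 = A *m x i + B *m u i) ->
  qf QN (x N) + \sum_(m <= i < N) (qf Q (x i) + qf Rc (u i)) =
  qf (P (N - m)) (x m) +
  \sum_(m <= i < N) qf (G (N - i).-1) (u i - ricK A B QN Q Rc (N - i) *m x i).
Proof.
move eqd : (N - m)%N => d; elim: d m eqd => [|d IH] m hd hm hdyn.
  have -> : m = N by apply/eqP; rewrite eqn_leq hm /= -subn_eq0 hd.
  by rewrite !big_geq.
have hmN : (m < N)%N by rewrite -subn_gt0 hd.
rewrite [in LHS]big_ltn // [in RHS]big_ltn // addrCA IH //; last 2 first.
- by rewrite subnS hd.
- by move=> i /andP [hi1 hi2]; apply: hdyn; rewrite hi2 ltnW.
rewrite hdyn ?leqnn ?hm // hd !addrA; congr (_ + _).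
by rewrite complete //; [exact: (ricP_psd d).1 | exact: hR.1 | exact: G_unit].
Qed.

End Ric.


Section Traj.
Variable R : realType.
Variables (nx nu : nat) (A : 'M[R]_nx) (B : 'M[R]_(nx, nu)) (E : 'cV[R]_nx)
  (QN Q : 'M[R]_nx) (Rc : 'M[R]_nu) (N : nat) (xm2 xm1 : 'cV[R]_nx) (EW w0 : R).
Hypotheses (hQN : psd QN) (hQ : psd Q) (hR : pd Rc).
Variable j : nat.
Hypothesis hj : (j < N)%N.

Local Notation P k := (ricP A B QN Q Rc k).
Local Notation G k := (Rc + B^T *m P k *m B).
Local Notation K k := (ricK A B QN Q Rc k).

Definition wj (i : nat) : R := if i == j then w0 else 0.

Definition feas (x : nat -> 'cV[R]_nx) (u : nat -> 'cV[R]_nu) : Prop :=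
  x 0%N = 0 /\ (forall i, (i < N)%N -> x i.+1 = A *m x i + B *m u i + wj i *: E) /\
  (forall i, (i < N)%N -> (i <= j)%N -> u i = 0).

Lemma coef_feas x u : coef_optimal A B E QN Q Rc N xm2 xm1 EW w0 j%:Z x u ->
  feas x u /\ forall x' u', feas x' u' -> lq_cost QN Q Rc N x u <= lq_cost QN Q Rc N x' u'.
Proof.
have cw : forall i, coef_w EW w0 j%:Z i = wj i by [].
have cx : coef_xini xm2 xm1 j%:Z = 0 by [].
have cf : forall i, coef_fixed j%:Z i = (i <= j)%N by [].
move=> [[h0 [h1 h2]] hopt]; split.
  split; first by rewrite h0 cx.
  split; first by move=> i hi; rewrite h1 // cw.
  by move=> i hi hij; apply: h2; rewrite ?cf.
move=> x' u' [g0 [g1 g2]]; apply: hopt; split; first by rewrite g0 cx.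
split; first by move=> i hi; rewrite g1 // cw.
by move=> i hi; rewrite cf; apply: g2.
Qed.

Lemma feas_zero x u : feas x u -> forall i, (i <= j)%N -> x i = 0.
Proof.
move=> [h0 [h1 h2]]; elim=> [|i IH] hi; first by [].
have hiN : (i < N)%N by apply: leq_ltn_trans hj; apply: ltnW.
have hij : (i == j) = false by apply/negbTE; rewrite neq_ltn hi.
rewrite h1 // IH ?(ltnW hi) // h2 ?(ltnW hi) // /wj hij.
by rewrite !mulmx0 scale0r !addr0.
Qed.

Lemma feas_j1 x u : feas x u -> x j.+1 = w0 *: E.
Proof.
move=> hf; have [h0 [h1 h2]] := hf.
by rewrite h1 // (feas_zero hf) // h2 // !mulmx0 /wj eqxx !add0r.
Qed.

Lemma cost_dec x u : feas x u -> lq_cost QN Q Rc N x u =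
  qf (P (N - j.+1)) (w0 *: E) +
  \sum_(j.+1 <= i < N) qf (G (N - i).-1) (u i - K (N - i) *m x i).
Proof.
move=> hf; have [h0 [h1 h2]] := hf.
rewrite /lq_cost -(big_mkord xpredT (fun i => qf Q (x i) + qf Rc (u i))).
rewrite (big_cat_nat (n := j.+1)) //=.
rewrite big_nat_cond big1 ?add0r; last first.
  move=> i /andP [/andP [_ hi] _].
  have hiN : (i < N)%N by apply: leq_trans hj.
  by rewrite (feas_zero hf) // h2 // !qf0 addr0.
rewrite (tail (A:=A) (B:=B) hQN hQ hR) //; first by rewrite (feas_j1 hf).
move=> i /andP [hi1 hi2]; rewrite h1 // /wj.
rewrite (_ : (i == j) = false) ?scale0r ?addr0 //.
by apply/negbTE; rewrite neq_ltn hi1 orbT.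
Qed.

Definition uf_of (i : nat) (y : 'cV[R]_nx) : 'cV[R]_nu :=
  if (i <= j)%N then 0 else K (N - i) *m y.

Fixpoint xf (i : nat) : 'cV[R]_nx :=
  if i is i'.+1 then A *m xf i' + B *m uf_of i' (xf i') + wj i' *: E else 0.

Definition uf i := uf_of i (xf i).

Lemma feas_f : feas xf uf.
Proof.
split; first by []. split; first by [].
by move=> i _ hi; rewrite /uf /uf_of hi.
Qed.

Lemma qf_ge0 k v : 0 <= qf (G k) v.
Proof.
have [->|nv] := eqVneq v 0; first by rewrite qf0.
exact: ltW (G_pd B (ricP_psd A B hQN hQ hR k).2 hR nv).
Qed.

Lemma opt_feedback x u :
  coef_optimal A B E QN Q Rc N xm2 xm1 EW w0 j%:Z x u ->
  forall i, (j < i < N)%N -> u i = K (N - i) *m x i.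
Proof.
move=> /coef_feas [hf hopt] i /andP [hi1 hi2].
have := hopt _ _ feas_f; rewrite !cost_dec //; last exact: feas_f.
have S0 : \sum_(j.+1 <= l < N) qf (G (N - l).-1) (uf l - K (N - l) *m xf l) = 0.
  rewrite big_nat_cond big1 // => l /andP [/andP [hl _] _].
  by rewrite /uf /uf_of leqNgt hl /= subrr qf0.
rewrite S0 addr0 gerDl => hle.
have h0 : \sum_(j.+1 <= l < N) qf (G (N - l).-1) (u l - K (N - l) *m x l) = 0.
  by apply/le_anti; rewrite hle /=; apply: sumr_ge0 => l _; apply: qf_ge0.
move/eqP: h0; rewrite psumr_eq0; last by move=> l _; apply: qf_ge0.
move=> /allP /(_ i); rewrite mem_index_iota hi1 hi2 => /(_ isT) /= /eqP hq.
apply/eqP; rewrite -subr_eq0; case: eqVneq => [//|nz].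
by have := G_pd B (ricP_psd A B hQN hQ hR (N - i).-1).2 hR nz; rewrite hq ltxx.
Qed.


Lemma Abar_step k : (j < k)%N ->
  Abar A B QN Q Rc N j.+1 k = Acl A B QN Q Rc N k *m Abar A B QN Q Rc N j.+1 k.-1.
Proof.
move=> hk; rewrite /Abar hk /=.
case: k hk => [//|k] hk /=.
rewrite subSS.
case: (ltngtP j.+1 k) => h.
- by have -> : (k - j = (k - j.+1).+1)%N by lia.
- by have -> : (k - j = 0)%N by lia.
- have -> : (k - j = 1)%N by lia.
  have -> : (k - j.+1 = 0)%N by lia.
  by rewrite [LHS]/=.
Qed.

Lemma opt_state x u : coef_optimal A B E QN Q Rc N xm2 xm1 EW w0 j%:Z x u ->
  forall k, (j < k <= N)%N -> x k = w0 *: (Abar A B QN Q Rc N j.+1 k.-1 *m E).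
Proof.
move=> ho; have [hf _] := coef_feas ho; have [h0 [h1 h2]] := hf.
elim=> [//|k IH] /andP [hk1 hk2].

have hkN : (k < N)%N by [].

case: (eqVneq k j) => [->|hkj].
  by rewrite (feas_j1 hf) /Abar ltnn mul1mx.
have hjk : (j < k)%N by rewrite ltn_neqAle eq_sym hkj -ltnS.

rewrite (h1 _ hkN).
rewrite (opt_feedback ho); last by rewrite hjk hkN.
rewrite IH; last by rewrite hjk ltnW.
rewrite /wj (negbTE hkj) scale0r addr0.
rewrite [k.+1.-1]/= (Abar_step hjk) (mulmxA B) -mulmxDl -mulmxA scalemxAr.
by rewrite !scalemxAr /Acl.
Qed.

Lemma opt_zero x u : coef_optimal A B E QN Q Rc N xm2 xm1 EW w0 j%:Z x u ->
  forall k, (k <= j)%N -> x k = 0.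
Proof. by move=> ho; have [hf _] := coef_feas ho; apply: feas_zero hf. Qed.

End Traj.


Theorem lemma2 (R : realType) (nx nu : nat)
  (A : 'M[R]_nx) (B : 'M[R]_(nx, nu)) (E : 'cV[R]_nx)
  (QN Q : 'M[R]_nx) (Rc : 'M[R]_nu)
  (hQN : psd QN) (hQ : psd Q) (hR : pd Rc)
  (hstab : stabilizable A B) (hdet : detectable_sqrt A Q)
  (N p : nat) (xm2 xm1 : 'cV[R]_nx) (EW w0 : R)
  (Omega : Type) (phi : int -> Omega -> R)
  (xs : int -> nat -> 'cV[R]_nx) (us : int -> nat -> 'cV[R]_nu)
  (hopt : forall j : int, -2 <= j <= (N%:Z - 1) ->
     coef_optimal A B E QN Q Rc N xm2 xm1 EW w0 j (xs j) (us j))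
  (k : nat) (hk : (k < N)%N) (om : Omega) :
  Xstar N phi xs k om - Xtrun p phi xs k om =
  (if (k <= p)%N then 0
   else \sum_(0 <= j < k - p) (w0 * phi j%:Z om) *:
          (Abar A B QN Q Rc N (j.+1) k.-1 *m E)).
Proof.
have hoptn : forall i : nat, (i < N)%N ->
    coef_optimal A B E QN Q Rc N xm2 xm1 EW w0 i%:Z (xs i%:Z) (us i%:Z).
  move=> i hi; apply: hopt; apply/andP; split; lia.
set f := fun i : nat => phi i%:Z om *: xs i%:Z k.
have HX : Xstar N phi xs k om =
    phi (-2) om *: xs (-2) k + phi (-1) om *: xs (-1) k + \sum_(0 <= i < N) f i.
  rewrite /Xstar addn2 big_nat_recl // big_nat_recl // addrA.
  congr (_ + _ + _).
  by apply: eq_bigr => i _; rewrite /f -addn2 PoszD addrK.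
have HT : Xtrun p phi xs k om =
    phi (-2) om *: xs (-2) k + phi (-1) om *: xs (-1) k + \sum_(k - p <= i < k) f i.
  by rewrite /Xtrun max0n.
rewrite HX HT.
have hkp : (k - p <= k)%N by apply: leq_subr.
rewrite (big_cat_nat (n := (k - p)%N)) //=; last by apply: leq_trans hkp (ltnW hk).
rewrite (big_cat_nat (m := (k - p)%N) (n := k)) //=; last exact: ltnW.
have Z : \sum_(k <= i < N) f i = 0.
  rewrite big_nat_cond big1 // => i /andP [/andP [hi1 hi2] _].
  by rewrite /f (opt_zero hi2 (hoptn i hi2)) // scaler0.
rewrite Z addr0 addrCA addrK.
case: ifP => hkp'.
  have -> : (k - p = 0)%N by lia.
  by rewrite big_geq.
apply: eq_big_nat => i /andP [_ hi].
have hiN : (i < N)%N by lia.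
rewrite /f (opt_state hQN hQ hR hiN (hoptn i hiN)); last by apply/andP; split; lia.
by rewrite scalerA mulrC.
Qed.
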